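(* Let $T:\Omega\to\Omega$ be measurable and $\mu$ a $T$-invariant probability measure, and let $U\subset\Omega$ with $\mu(U)>0$. Then for every $L\in\mathbb{N}$, $$\mathbb{P}(Z^L_U\ge1)=\mu(U)\sum_{j=1}^{L}\alpha_1(j,U).$$ If moreover $U_n\subset\Omega$ is a nested sequence with $\mu(U_n)\to0$, such that for every $L$ the limit $\alpha_1(L)=\lim_{n\to\infty}\alpha_1(L,U_n)$ exists and $\alpha_1=\lim_{L\to\infty}\alpha_1(L)>0$, then $$\lim_{L\to\infty}\lim_{n\to\infty}\frac{\mathbb{P}(Z^L_{U_n}\ge1)}{L\,\mu(U_n)}=\alpha_1.$$
   Context: $\mathbb{P}=\mathbb{P}_\mu$. $Z^L_U=\sum_{j=0}^{L-1}\mathbbm{1}_U\circ T^j$, so $\{Z^L_U\ge1\}$ is the set of points entering $U$ at some time $0\le j<L$. $\tau_U(x)=\min\{j\ge1:T^jx\in U\}$ is the first return/entry time, $\mu_U(A)=\mu(A\cap U)/\mu(U)$, and $\alpha_1(L,U)=\mu_U(L\le\tau_U)$. *)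

(* Defs.v *)
From HB Require Import structures.
From mathcomp Require Import all_boot all_order all_algebra.
From mathcomp Require Import all_classical all_reals all_analysis.
Set Implicit Arguments. Unset Strict Implicit. Unset Printing Implicit Defensive.
Import Order.TTheory GRing.Theory Num.Theory.
Import numFieldNormedType.Exports.
Local Open Scope classical_set_scope.
Local Open Scope ring_scope.

Section Defs.
Context {d : measure_display} {Omega : measurableType d} {R : realType}.
Variables (mu : probability Omega R) (T : Omega -> Omega).

Definition PR (A : set Omega) : R := fine (mu A).

Definition Z (L : nat) (U : set Omega) (x : Omega) : nat :=
  (\sum_(0 <= j < L) ((iter j T x \in U) : nat))%N.

(* L <= tau_U x, where tau_U x = min {j >= 1 | T^j x \in U} (= +oo if empty) *)
Definition tau_ge (L : nat) (U : set Omega) (x : Omega) : Prop :=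
  forall j : nat, (0 < j < L)%N -> ~ U (iter j T x).

Definition alpha1 (L : nat) (U : set Omega) : R :=
  PR (U `&` [set x | tau_ge L U x]) / PR U.
End Defs.

(* Main.v *)
Require Import Defs.
From HB Require Import structures.
From mathcomp Require Import all_boot all_order all_algebra.
From mathcomp Require Import all_classical all_reals all_analysis.
Import Order.TTheory GRing.Theory Num.Theory.
Import numFieldNormedType.Exports.
Local Open Scope classical_set_scope.
Local Open Scope ring_scope.

Section P1.
Context (d : measure_display) (Omega : measurableType d)
  (R : realType) (mu : probability Omega R) (T : Omega -> Omega).

Lemma Z_S L U x : Z T L.+1 U x = ((x \in U) + Z T L U (T x))%N.
Proof.
rewrite /Z big_nat_recl //; congr (_ + _)%N.
by apply: eq_bigr => j _; rewrite iterSr.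
Qed.

Lemma E_ex L U y : (1 <= Z T L U y)%N <-> exists j, (j < L)%N /\ U (iter j T y).
Proof.
elim: L y => [|L IH] y.
  rewrite /Z big_geq //; split => // -[j []] //.
rewrite Z_S; split.
  case: (boolP (y \in U)) => [/set_mem Uy _|_ /=]; first by exists 0%N.
  rewrite add0n => /IH [j [jL Uj]]; exists j.+1; split => //.
  by rewrite iterSr.
case=> [[|j] [jL Uj]] /=.
  by rewrite (mem_set Uj).
have : (1 <= Z T L U (T y))%N by apply/IH; exists j; rewrite -iterSr.
by move=> h; apply: leq_trans h (leq_addl _ _).
Qed.

Lemma E_S L U : [set x | (1 <= Z T L.+1 U x)%N] =
  U `|` T @^-1` [set x | (1 <= Z T L U x)%N].
Proof.
apply/seteqP; split => x /=; rewrite Z_S.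
  case: (boolP (x \in U)) => [/set_mem|]; first by left.
  by rewrite add0n; right.
case=> [Ux|h]; first by rewrite (mem_set Ux).
by apply: leq_trans h (leq_addl _ _).
Qed.

Lemma tau_eq L U : U `\` T @^-1` [set x | (1 <= Z T L U x)%N] =
  U `&` [set x | tau_ge T L.+1 U x].
Proof.
apply/seteqP; split => x /= [Ux h]; split => //.
  move=> [|j] // /andP[_ jL] Uj; apply: h; apply/E_ex.
  by exists j; rewrite -iterSr.
move=> /E_ex [j [jL Uj]]; apply: (h j.+1) => //.
by rewrite iterSr.
Qed.

Hypothesis mT : measurable_fun setT T.
Hypothesis Tinv : forall A : set Omega, measurable A -> mu (T @^-1` A) = mu A.

Lemma mE L U : measurable U -> measurable [set x | (1 <= Z T L U x)%N].
Proof.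
move=> mU; elim: L => [|L IH].
  have -> : [set x | (1 <= Z T 0 U x)%N] = set0.
    by apply/seteqP; split => x //= /E_ex [j []].
  exact: measurable0.
rewrite E_S; apply: measurableU => //.
by rewrite -[_ @^-1` _]setTI; apply: mT.
Qed.

Lemma part1 U : measurable U -> (0 < mu U)%E -> forall L : nat,
       PR mu [set x | (1 <= Z T L U x)%N]
       = PR mu U * \sum_(1 <= j < L.+1) alpha1 mu T j U.
Proof.
move=> mU mU0 L.
have PU0 : PR mu U != 0.
  rewrite gt_eqF // fine_gt0 // mU0 /=.
  by have /fin_numPlt/andP[] := fin_num_measure mu U mU.
rewrite mulr_sumr.
under eq_bigr => j _ do rewrite /alpha1 mulrCA divff // mulr1.
elim: L => [|L IH].
  rewrite big_geq //.
  have -> : [set x | (1 <= Z T 0 U x)%N] = set0.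
    by apply/seteqP; split => x //= /E_ex [j []].
  by rewrite /PR measure0.
rewrite big_nat_recr //= -IH.
have mTE : measurable (T @^-1` [set x | (1 <= Z T L U x)%N]).
  by rewrite -[_ @^-1` _]setTI; apply: mT => //; apply: mE.
set A := (T @^-1` [set x | (1 <= Z T L U x)%N]).
rewrite E_S -/A.
have -> : U `|` A = A `|` (U `\` A).
  apply/seteqP; split => x /=.
    by case=> [Ux|Ax]; [have [Ax|nAx] := pselect (A x); [left|right]|left].
  by case=> [Ax|[Ux _]]; [right|left].
rewrite /PR measureU //; last 2 first.
- exact: measurableD.
- by rewrite setDIK.
rewrite fineD ?fin_num_measure //; last exact: measurableD.
congr (_ + _).
  apply: (congr1 fine); rewrite /A; apply: Tinv; exact: mE.
by rewrite tau_eq.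
Qed.
End P1.

Lemma cvg_sum_nat (R : realType) (f : nat -> nat -> R) (a : nat -> R) L :
  (forall j, f j @ \oo --> a j) ->
  (fun n => \sum_(1 <= j < L.+1) f j n) @ \oo --> \sum_(1 <= j < L.+1) a j.
Proof.
move=> h; elim: L => [|L IH].
  rewrite big_geq //; under eq_fun do rewrite big_geq //; exact: cvg_cst.
rewrite big_nat_recr //=; under eq_fun do rewrite big_nat_recr //=.
exact: cvgD.
Qed.

Theorem mainTheorem2 (d : measure_display) (Omega : measurableType d)
  (R : realType) (mu : probability Omega R) (T : Omega -> Omega) :
  measurable_fun setT T ->
  (forall A : set Omega, measurable A -> mu (T @^-1` A) = mu A) ->
  (forall (U : set Omega), measurable U -> (0 < mu U)%E ->
     forall L : nat,
       PR mu [set x | (1 <= Z T L U x)%N]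
       = PR mu U * \sum_(1 <= j < L.+1) alpha1 mu T j U)
  /\
  (forall (U : nat -> set Omega) (a : nat -> R) (a1 : R),
     (forall n, measurable (U n)) ->
     (forall n, (0 < mu (U n))%E) ->
     (forall n, U n.+1 `<=` U n) ->
     (fun n => PR mu (U n)) @ \oo --> 0 ->
     (forall L, (fun n => alpha1 mu T L (U n)) @ \oo --> a L) ->
     a @ \oo --> a1 ->
     0 < a1 ->
     exists b : nat -> R,
       (forall L, (fun n => PR mu [set x | (1 <= Z T L (U n) x)%N]
                              / (L%:R * PR mu (U n))) @ \oo --> b L)
       /\ b @ \oo --> a1).
Proof.
move=> mT Tinv.
have P1 := @part1 d Omega R mu T mT Tinv.
split => //.
move=> U a a1 mU pos _ _ ha hA _.
exists (fun L => L%:R^-1 * \sum_(1 <= j < L.+1) a j); split.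
  move=> L.
  have -> : (fun n => PR mu [set x | (1 <= Z T L (U n) x)%N] / (L%:R * PR mu (U n)))
     = (fun n => L%:R^-1 * \sum_(1 <= j < L.+1) alpha1 mu T j (U n)).
    apply: funext => n; rewrite P1 //.
    have PU0 : PR mu (U n) != 0.
      rewrite gt_eqF // fine_gt0 // pos /=.
      by have /fin_numPlt/andP[] := fin_num_measure mu (U n) (mU n).
    rewrite [_%:R * _]mulrC invfM mulrA [X in X * _]mulrAC divff // mul1r.
    by rewrite mulrC.
  apply: cvgM; first exact: cvg_cst.
  exact: cvg_sum_nat.
rewrite -cvg_shiftS /=.
have -> : (fun n => n.+1%:R^-1 * \sum_(1 <= j < n.+2) a j)
   = arithmetic_mean (fun k => a k.+1).
  apply: funext => n; rewrite /arithmetic_mean /series /= big_add1.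
  by [].
apply: cesaro.
by rewrite cvg_shiftS.
Qed.
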